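(* For all $n\in\mathbb N$ the following hold in the $q$-shuffle algebra $\mathbb V$: $$\sum_{k=0}^n G_{n-k}\star W_{-k}\,q^{2k-n}=\sum_{k=0}^n W_{-k}\star G_{n-k}\,q^{n-2k},$$ $$\sum_{k=0}^n G_{n-k}\star W_{k+1}\,q^{n-2k}=\sum_{k=0}^n W_{k+1}\star G_{n-k}\,q^{2k-n},$$ $$\sum_{k=0}^n \tilde G_{n-k}\star W_{-k}\,q^{n-2k}=\sum_{k=0}^n W_{-k}\star \tilde G_{n-k}\,q^{2k-n},$$ $$\sum_{k=0}^n \tilde G_{n-k}\star W_{k+1}\,q^{2k-n}=\sum_{k=0}^n W_{k+1}\star \tilde G_{n-k}\,q^{n-2k}.$$
   Context: Let $\mathbb F$ be a field and let $q\in\mathbb F$ be nonzero and not a root of unity. Let $\mathbb V$ be the free associative $\mathbb F$-algebra on noncommuting $x,y$, with basis the words (including $1$). Juxtaposition denotes concatenation. Set $\langle x,x\rangle=\langle y,y\rangle=2$ and $\langle x,y\rangle=\langle y,x\rangle=-2$. The $q$-shuffle product $\star$ is the bilinear product determined as follows: - $1\star v=v\star 1=v$; - for nontrivial words $u=u_1\cdots u_r$ and $v=v_1\cdots v_s$, $$u\star v=u_1((u_2\cdots u_r)\star v)+v_1(u\star(v_2\cdots v_s))q^{\langle u_1,v_1\rangle+\cdots+\langle u_r,v_1\rangle}.$$ This makes $\mathbb V$ an associative algebra, the $q$-shuffle algebra. For $k\in\mathbb N$: - $W_{-k}=xyx\cdots x$ is the alternating word of length $2k+1$ beginning and ending with $x$;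 - $W_{k+1}=yxy\cdots y$ is the alternating word of length $2k+1$ beginning and ending with $y$; - $G_k=yxyx\cdots yx$ is the word of length $2k$; - $\tilde G_k=xyxy\cdots xy$ is the word of length $2k$; - $G_0=\tilde G_0=1$. *)

(* Defs.v *)
From mathcomp Require Import all_boot all_order all_algebra.
Set Implicit Arguments. Unset Strict Implicit. Unset Printing Implicit Defensive.
Import Order.TTheory GRing.Theory Num.Theory.
Local Open Scope ring_scope.

Definition letter := bool.
Definition lx : letter := false.
Definition ly : letter := true.
Definition word := seq letter.

Definition ip (a b : letter) : int := if a == b then 2%R else (- 2)%R.

Section QShuffle.
Variables (F : fieldType) (q : F).

(* A formal F-linear combination of words, as a list of (coefficient, word). *)
Definition fsum := seq (F * word).

Definition prep (a : letter) (s : fsum) : fsum := [seq (p.1, a :: p.2) | p <- s].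
Definition scal (c : F) (s : fsum) : fsum := [seq (c * p.1, p.2) | p <- s].

(* The q-shuffle product of two words, as a formal linear combination:
   1 * v = v * 1 = v, and
   u * v = u1 ((u2..ur) * v) + v1 (u * (v2..vs)) q^{<u1,v1>+...+<ur,v1>}. *)
Fixpoint qsh (u : word) : word -> fsum :=
  match u with
  | [::] => fun v => [:: (1, v)]
  | a :: u' =>
      fix inner (v : word) : fsum :=
        match v with
        | [::] => [:: (1, a :: u')]
        | b :: v' => prep a (qsh u' v) ++
                     scal (q ^ (\sum_(c <- a :: u') ip c b)) (prep b (inner v'))
        end
  end.

Definition coef (s : fsum) (w : word) : F :=
  \sum_(p <- s) (if p.2 == w then p.1 else 0).

(* An element of V is determined by its coefficients on the word basis;
   star u v w is the coefficient of w in u * v (q-shuffle product). *)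
Definition star (u v : word) (w : word) : F := coef (qsh u v) w.

End QShuffle.

(* W_{-k} = xyx...x (length 2k+1), W_{k+1} = yxy...y (length 2k+1),
   G_k = yxyx...yx (length 2k), Gt_k = xyxy...xy (length 2k). *)
Definition Wneg (k : nat) : word := mkseq (fun i => if odd i then ly else lx) (2 * k).+1.
Definition Wpos (k : nat) : word := mkseq (fun i => if odd i then lx else ly) (2 * k).+1.
Definition Gw (k : nat) : word := mkseq (fun i => if odd i then lx else ly) (2 * k).
Definition Gtw (k : nat) : word := mkseq (fun i => if odd i then ly else lx) (2 * k).

(* Main.v *)
Require Import Defs.
From mathcomp Require Import all_boot all_order all_algebra.
From mathcomp Require Import ring zify.
Import Order.TTheory GRing.Theory Num.Theory.
Local Open Scope ring_scope.
Section S.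
Variables (F : fieldType) (q : F).
Definition esum (u : word) (a : letter) : int := \sum_(c <- u) ip c a.
Definition ldu (u : word) (a : letter) (f : word -> F) : F :=
  if u is c :: u' then (if c == a then f u' else 0) else 0.
Lemma qsh_cons c u b v : qsh q (c :: u) (b :: v) =
  prep c (qsh q u (b :: v)) ++ scal (q ^ esum (c :: u) b) (prep b (qsh q (c :: u) v)).
Proof. by []. Qed.
Lemma qsh_nilr u : qsh q u [::] = [:: (1, u)].
Proof. by case: u. Qed.
Lemma coef_cat (s t : fsum F) w : coef (s ++ t) w = coef s w + coef t w.
Proof. by rewrite /coef big_cat. Qed.
Lemma coef_prep c (s : fsum F) w : coef (prep c s) w =
  if w is a :: w' then (if c == a then coef s w' else 0) else 0.
Proof.
rewrite /coef /prep big_map; case: w => [|a w].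
  by rewrite big1.
case: eqP => [->|ne]; first by apply: eq_bigr => p _ /=; rewrite eqseq_cons eqxx.
by rewrite big1 // => p _ /=; rewrite eqseq_cons; case: eqP.
Qed.
Lemma coef_scal (c : F) (s : fsum F) w : coef (scal c s) w = c * coef s w.
Proof.
rewrite /coef /scal big_map mulr_sumr; apply: eq_bigr => p _ /=.
by case: ifP; rewrite ?mulr0.
Qed.
Lemma coef1 v w : coef [:: (1 : F, v)] w = (v == w)%:R.
Proof. by rewrite /coef big_seq1 /=; case: eqP. Qed.
Lemma star_nil u v : star q u v [::] = ((u == [::]) && (v == [::]))%:R.
Proof.
case: u => [|c u]; first by rewrite /star coef1.
case: v => [|b v]; first by rewrite /star coef1.
by rewrite /star qsh_cons coef_cat coef_scal !coef_prep mulr0 addr0.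
Qed.
Lemma starL u v a w : star q u v (a :: w) =
  ldu u a (fun u' => star q u' v w) + ldu v a (fun v' => q ^ esum u a * star q u v' w).
Proof.
case: u => [|c u].
  rewrite /star coef1 /= /esum big_nil expr0z add0r.
  case: v => [|b v] //=; rewrite coef1 mul1r eqseq_cons.
  by case: (b == a).
case: v => [|b v].
  rewrite /star coef1 /= eqseq_cons addr0 qsh_nilr coef1.
  by case: (c == a).
rewrite /star qsh_cons coef_cat coef_scal !coef_prep /=.
by case: (b =P a) => [->|_]; rewrite ?mulr0.
Qed.
Definition rdu (u : word) (a : letter) (f : word -> F) : F :=
  if u is c0 :: u0 then (if last c0 u0 == a then f (belast c0 u0) else 0) else 0.
Lemma rdu_rcons s l a f : rdu (rcons s l) a f = if l == a then f s else 0.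
Proof. by case: s => [|c s] //=; rewrite last_rcons belast_rcons. Qed.
Lemma rdu_nil a f : rdu [::] a f = 0. Proof. by []. Qed.
Lemma ldu_nil a f : ldu [::] a f = 0. Proof. by []. Qed.
Lemma ldu_cons c s a f : ldu (c :: s) a f = if c == a then f s else 0. Proof. by []. Qed.
Lemma rcons_eq0 (s : word) x : (rcons s x == [::]) = false. Proof. by case: s. Qed.
Lemma esum_cons c u a : esum (c :: u) a = ip c a + esum u a.
Proof. by rewrite /esum big_cons. Qed.
Lemma esum_rcons c u a : esum (rcons u c) a = esum u a + ip c a.
Proof. by rewrite /esum -cats1 big_cat big_seq1. Qed.
Lemma esum_nil a : esum [::] a = 0. Proof. by rewrite /esum big_nil. Qed.
Lemma ipC a b : ip a b = ip b a. Proof. by case: a; case: b. Qed.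

Lemma starR (hq0 : q != 0) u v w a : star q u v (rcons w a) =
  rdu u a (fun u' => q ^ esum v a * star q u' v w) + rdu v a (fun v' => star q u v' w).
Proof.
elim: w u v => [|d w IH] u v.
  rewrite /= starL.
  case/lastP: u => [|u0 c]; [|case: u0 => [|c' u0]];
  case/lastP: v => [|v0 b]; try case: v0 => [|b' v0];
  rewrite ?(ldu_nil, rdu_nil, rdu_rcons) /= ?(ldu_cons, star_nil, rcons_eq0, esum_nil, esum_cons, esum_rcons, last_rcons, belast_rcons) /=
   ?(expr0z, mulr0, mul1r, if_same, add0r, addr0) //.
rewrite rcons_cons starL.
case/lastP: u => [|u0 c]; [|case: u0 => [|c' u0]];
case/lastP: v => [|v0 b]; try case: v0 => [|b' v0];
rewrite ?(ldu_nil, rdu_nil, rdu_rcons) /= ?ldu_cons ?IH ?starL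
  ?(ldu_nil, rdu_nil, rdu_rcons) /= ?(ldu_cons, esum_nil, esum_cons, esum_rcons, last_rcons, belast_rcons) /=
   ?(expr0z, mulr0, mul1r, if_same, add0r, addr0) //;
repeat match goal with |- context [if ?x == ?y then _ else _] => case: (x =P y) => [?|_]; subst end;
rewrite ?(expr0z, mulr0, mul1r, if_same, add0r, addr0) ?expfzDr //;
clear IH; repeat match goal with x : letter |- _ => case: x end;
rewrite /ip /=; ring.
Qed.
Lemma eq_ldu u a f g : (forall x, f x = g x) -> ldu u a f = ldu u a g.
Proof. by move=> fg; case: u => //= c u; rewrite fg. Qed.
Lemma rdu_rev u a f : rdu (rev u) a f = ldu u a (fun u' => f (rev u')).
Proof. by case: u => [|c u] //; rewrite rev_cons rdu_rcons. Qed.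
Lemma esum_rev u a : esum (rev u) a = esum u a.
Proof. by rewrite /esum big_rev. Qed.
Lemma rev_eq0 (u : word) : (rev u == [::]) = (u == [::]).
Proof. by case: u => // c u; rewrite rev_cons rcons_eq0. Qed.

Lemma star_rev (hq0 : q != 0) u v w : star q u v w = star q (rev v) (rev u) (rev w).
Proof.
elim: w u v => [|a w IH] u v.
  by rewrite !star_nil !rev_eq0 andbC.
rewrite starL rev_cons (starR hq0) !rdu_rev esum_rev addrC.
congr (_ + _); apply: eq_ldu => x; by rewrite IH.
Qed.

Lemma ldu_neg u a f : ldu (map negb u) (negb a) f = ldu u a (fun u' => f (map negb u')).
Proof. by case: u => [|c u] //=; case: c; case: a. Qed.
Lemma esum_neg u a : esum (map negb u) (negb a) = esum u a.
Proof. by rewrite /esum big_map; apply: eq_bigr => c _; case: c; case: a. Qed.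

Lemma star_neg u v w : star q (map negb u) (map negb v) (map negb w) = star q u v w.
Proof.
elim: w u v => [|a w IH] u v.
  by rewrite !star_nil; case: u; case: v.
rewrite map_cons !starL !ldu_neg esum_neg.
congr (_ + _); apply: eq_ldu => x; by rewrite IH.
Qed.
End S.

Lemma mkseq_cons (T : Type) (f : nat -> T) n : mkseq f n.+1 = f 0%N :: mkseq (fun i => f i.+1) n.
Proof. by rewrite /mkseq /= -add1n iotaDl -map_comp. Qed.

Lemma Wneg_cons k : Wneg k = lx :: Gw k.
Proof. by rewrite /Wneg mkseq_cons /Gw; congr (_ :: _); apply: eq_mkseq => i /=; case: odd. Qed.
Lemma Gw_S k : Gw k.+1 = ly :: Wneg k.
Proof.
rewrite /Gw (_ : (2 * k.+1 = (2 * k).+2)%N); last by rewrite mulnS.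
by rewrite mkseq_cons /Wneg; congr (_ :: _); apply: eq_mkseq => i /=; case: odd.
Qed.
Lemma Gw0 : Gw 0 = [::]. Proof. by []. Qed.

Lemma neg_Wneg k : map negb (Wneg k) = Wpos k.
Proof. by rewrite /Wneg /Wpos /mkseq -map_comp; apply: eq_map => i /=; case: odd. Qed.
Lemma neg_Gw k : map negb (Gw k) = Gtw k.
Proof. by rewrite /Gw /Gtw /mkseq -map_comp; apply: eq_map => i /=; case: odd. Qed.

Lemma rev_Wneg k : rev (Wneg k) = Wneg k.
Proof.
apply: (@eq_from_nth _ lx); first by rewrite size_rev.
rewrite size_rev /Wneg size_mkseq => i lti.
rewrite nth_rev ?size_mkseq // !nth_mkseq ?subSS ?ltnS ?leq_subr //.
by rewrite oddN // oddM.
Qed.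
Lemma rev_Gw k : rev (Gw k) = Gtw k.
Proof.
apply: (@eq_from_nth _ lx); first by rewrite size_rev /Gw /Gtw !size_mkseq.
rewrite size_rev /Gw size_mkseq => i lti.
rewrite nth_rev ?size_mkseq // /Gtw !nth_mkseq //; last first.
  by rewrite ltn_subLR // addSn ltnS leq_addl.
by rewrite oddB // oddM /=; case: odd.
Qed.

Lemma esum_Gw j a : esum (Gw j) a = 0.
Proof.
elim: j => [|j IH]; first by rewrite Gw0 esum_nil.
by rewrite Gw_S Wneg_cons !esum_cons IH; clear IH; case: a.
Qed.
Lemma esum_Wneg_y k : esum (Wneg k) ly = (-2)%R.
Proof. by rewrite Wneg_cons esum_cons esum_Gw addr0. Qed.

Lemma ldu_Gw_x (F : fieldType) j (f : word -> F) : ldu F (Gw j) lx f = 0.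
Proof. by case: j => [|j]; rewrite ?Gw0 ?Gw_S. Qed.
Lemma ldu_Gw_y (F : fieldType) j (f : word -> F) :
  ldu F (Gw j) ly f = if j is j'.+1 then f (Wneg j') else 0.
Proof. by case: j => [|j]; rewrite ?Gw0 ?Gw_S. Qed.
Lemma ldu_Wneg_y (F : fieldType) j (f : word -> F) : ldu F (Wneg j) ly f = 0.
Proof. by rewrite Wneg_cons. Qed.

Lemma ident1 (F : fieldType) (q : F) (hq0 : q != 0) n w :
  \sum_(k < n.+1) star q (Gw (n - k)) (Wneg k) w * q ^ ((2 * k)%:Z - n%:Z)
  = \sum_(k < n.+1) star q (Wneg k) (Gw (n - k)) w * q ^ (n%:Z - (2 * k)%:Z).
Proof.
case: w => [|a w].
  by rewrite !big1 // => k _; rewrite star_nil Wneg_cons /= ?andbF mul0r.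
case: a.
-
  under eq_bigr => k _ do rewrite starL ldu_Wneg_y addr0 ldu_Gw_y.
  under [RHS]eq_bigr => k _ do rewrite starL ldu_Wneg_y add0r ldu_Gw_y esum_Wneg_y.
  case: n => [|m]; first by rewrite !big_ord1 /= !mul0r.
  rewrite big_ord_recr [RHS]big_ord_recr /= subnn !mul0r !addr0.
  under eq_bigr => k _ do rewrite subSn // -1?ltnS //.
  under [RHS]eq_bigr => k _ do rewrite subSn // -1?ltnS //.
  rewrite (reindex_inj rev_ord_inj) /=; apply: eq_bigr => k _.
  rewrite subSS subKn -1?ltnS // [RHS]mulrC [RHS]mulrA -expfzDr // [RHS]mulrC.
  congr (_ * q ^ _); have := ltn_ord k; lia.
-
  under eq_bigr => k _ do rewrite starL Wneg_cons ldu_cons /= esum_Gw expr0z mul1r.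
  under [RHS]eq_bigr => k _ do rewrite starL Wneg_cons ldu_cons /=.
  rewrite (reindex_inj rev_ord_inj) /=; apply: eq_bigr => k _.
  rewrite !ldu_Gw_x add0r addr0 subSS subKn -1?ltnS //.
  congr (_ * q ^ _); have := ltn_ord k; lia.
Qed.

Lemma rev_Gtw k : rev (Gtw k) = Gw k.
Proof. by rewrite -rev_Gw revK. Qed.
Lemma neg_Gtw k : map negb (Gtw k) = Gw k.
Proof. by rewrite -neg_Gw (mapK negbK). Qed.
Lemma star_neg' (F : fieldType) (q : F) u v w :
  star q (map negb u) (map negb v) w = star q u v (map negb w).
Proof. by rewrite -{1}(mapK negbK w) star_neg. Qed.

Lemma ident3 (F : fieldType) (q : F) (hq0 : q != 0) n w :
  \sum_(k < n.+1) star q (Gtw (n - k)) (Wneg k) w * q ^ (n%:Z - (2 * k)%:Z)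
  = \sum_(k < n.+1) star q (Wneg k) (Gtw (n - k)) w * q ^ ((2 * k)%:Z - n%:Z).
Proof.
under eq_bigr => k _ do rewrite (star_rev _ _ hq0) rev_Wneg rev_Gtw.
under [RHS]eq_bigr => k _ do rewrite (star_rev _ _ hq0) rev_Wneg rev_Gtw.
by rewrite ident1.
Qed.

Theorem proposition6p3 (F : fieldType) (q : F) (hq0 : q != 0)
  (hq : forall m : nat, (0 < m)%N -> q ^+ m != 1) (n : nat) :
  [/\ forall w : word,
        \sum_(k < n.+1) star q (Gw (n - k)) (Wneg k) w * q ^ ((2 * k)%:Z - n%:Z)
        = \sum_(k < n.+1) star q (Wneg k) (Gw (n - k)) w * q ^ (n%:Z - (2 * k)%:Z),
      forall w : word,
        \sum_(k < n.+1) star q (Gw (n - k)) (Wpos k) w * q ^ (n%:Z - (2 * k)%:Z)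
        = \sum_(k < n.+1) star q (Wpos k) (Gw (n - k)) w * q ^ ((2 * k)%:Z - n%:Z),
      forall w : word,
        \sum_(k < n.+1) star q (Gtw (n - k)) (Wneg k) w * q ^ (n%:Z - (2 * k)%:Z)
        = \sum_(k < n.+1) star q (Wneg k) (Gtw (n - k)) w * q ^ ((2 * k)%:Z - n%:Z)
    & forall w : word,
        \sum_(k < n.+1) star q (Gtw (n - k)) (Wpos k) w * q ^ ((2 * k)%:Z - n%:Z)
        = \sum_(k < n.+1) star q (Wpos k) (Gtw (n - k)) w * q ^ (n%:Z - (2 * k)%:Z)].
Proof.
split=> w.
- exact: ident1.
- under eq_bigr => k _ do rewrite -neg_Gtw -neg_Wneg star_neg'.
  under [RHS]eq_bigr => k _ do rewrite -neg_Gtw -neg_Wneg star_neg'.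
  exact: ident3.
- exact: ident3.
- under eq_bigr => k _ do rewrite -neg_Gw -neg_Wneg star_neg'.
  under [RHS]eq_bigr => k _ do rewrite -neg_Gw -neg_Wneg star_neg'.
  exact: ident1.
Qed.
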